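(* For all $n\ge 1$, $w\text{-}sat(Q_n,Q_2)=2^n-1$.
   Context: $Q_n$ is the hypercube on $\{0,1\}^n$ with edges between vertices differing in exactly one coordinate; $Q_2$ is the 4-cycle. A graph $G\subseteq Q_n$ (on the full vertex set $\{0,1\}^n$) is $(Q_n,Q_2)$-weakly-saturated if the edges of $E(Q_n)\setminus E(G)$ can be added one at a time, in some order, so that each newly added edge creates at least one new subgraph isomorphic to $Q_2$ (in the current graph). $w\text{-}sat(Q_n,Q_2)$ is the minimum number of edges of a $(Q_n,Q_2)$-weakly-saturated graph. *)

(* Defs.v *)
From mathcomp Require Import all_boot.
Set Implicit Arguments. Unset Strict Implicit. Unset Printing Implicit Defensive.

Definition qvert (n : nat) := {ffun 'I_n -> bool}.

Definition qadj (n : nat) (u v : qvert n) : bool :=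
  #|[set i : 'I_n | u i != v i]| == 1.

Definition qedge (n : nat) (e : {set qvert n}) : bool :=
  [exists u : qvert n, exists v : qvert n, (e == [set u; v]) && qadj u v].

Definition qedges (n : nat) : {set {set qvert n}} := [set e | qedge e].

(* Adding edge e to the graph with edge set H (on vertex set {0,1}^n)
   creates a new copy of Q_2 (a 4-cycle), i.e. a 4-cycle a-b-c-d-a on
   distinct vertices using e = {a,b} whose other edges lie in H. *)
Definition creates_Q2 (n : nat) (H : {set {set qvert n}}) (e : {set qvert n}) : Prop :=
  exists a b c d : qvert n,
    [/\ uniq [:: a; b; c; d], e = [set a; b],
        [set b; c] \in H, [set c; d] \in H & [set d; a] \in H].

Definition weakly_saturated (n : nat) (G : {set {set qvert n}}) : Prop :=
  G \subset qedges n /\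
  exists s : seq {set qvert n},
    [/\ uniq s, s =i qedges n :\: G &
        forall i, i < size s ->
          creates_Q2 (G :|: [set x in take i s]) (nth set0 s i)].

(* Main.v *)
Require Import Defs.
From mathcomp Require Import all_boot.
Set Implicit Arguments. Unset Strict Implicit. Unset Printing Implicit Defensive.


Lemma order_lemma (n : nat) (G M : {set {set qvert n}}) (key : {set qvert n} -> nat) :
  (forall e, e \in M -> exists a b c d : qvert n,
     [/\ uniq [:: a; b; c; d], e = [set a; b] &
       forall f, f \in [:: [set b; c]; [set c; d]; [set d; a]] ->
         f \in G \/ (f \in M /\ key f < key e)]) ->
  exists s : seq {set qvert n},
    [/\ uniq s, s =i M &
        forall i, i < size s ->
          creates_Q2 (G :|: [set x in take i s]) (nth set0 s i)].
Proof.
move=> H.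
pose leT := fun e1 e2 : {set qvert n} => key e1 <= key e2.
have tot : total leT by move=> x y; exact: leq_total.
have tr : transitive leT by move=> x y z; exact: leq_trans.
have rf : reflexive leT by move=> x; exact: leqnn.
exists (sort leT (enum M)); split.
- by rewrite sort_uniq enum_uniq.
- by move=> x; rewrite mem_sort mem_enum.
set s := sort leT (enum M).
have ss : sorted leT s by exact: sort_sorted.
move=> i ilt.
have eM : nth set0 s i \in M by rewrite -(mem_enum M) -(mem_sort leT) mem_nth.
have [a [b [c [d [u ea hf]]]]] := H _ eM.
have hin : forall f, f \in [:: [set b; c]; [set c; d]; [set d; a]] ->
   f \in G :|: [set x in take i s].
  move=> f /hf [fG | [fM kf]]; first by rewrite inE fG.
  rewrite inE; apply/orP; right; rewrite inE.
  have fs : f \in s by rewrite mem_sort mem_enum.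
  have jlt : index f s < size s by rewrite index_mem.
  case: (ltnP (index f s) i) => ji.
    rewrite -(nth_index set0 fs) -(nth_take _ ji) mem_nth // size_take.
    by case: ifP => //; rewrite leqNgt ilt.
  have := @sorted_leq_nth _ _ tr rf set0 s ss i (index f s) ilt jlt ji.
  by rewrite /leT nth_index // leqNgt kf.
exists a, b, c, d; split => //; apply: hin; rewrite !inE eqxx ?orbT //.
Qed.

Definition flipn (n : nat) (x : qvert n) (k : nat) : qvert n :=
  [ffun i : 'I_n => if (i : nat) == k then ~~ x i else x i].
Definition topb (n : nat) (x : qvert n) : nat := \max_(i : 'I_n | x i) (i : nat).
Definition v0 (n : nat) : qvert n := [ffun _ => false].
Definition tedge (n : nat) (x : qvert n) : {set qvert n} := [set x; flipn x (topb x)].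
Definition treeG (n : nat) : {set {set qvert n}} := [set tedge x | x in [set~ v0 n]].
Definition key (n : nat) (e : {set qvert n}) : nat := #|[set j : 'I_n | [forall v in e, v j]]|.

Lemma flipnE n (x : qvert n) k i : flipn x k i = if (i : nat) == k then ~~ x i else x i.
Proof. by rewrite ffunE. Qed.

Lemma flipnK n (x : qvert n) k : flipn (flipn x k) k = x.
Proof. apply/ffunP => i; rewrite !flipnE; by case: eqP => //; rewrite negbK. Qed.

Lemma flipnC n (x : qvert n) k m : flipn (flipn x k) m = flipn (flipn x m) k.
Proof. apply/ffunP => i; rewrite !flipnE; by do 2 case: eqP. Qed.

Lemma neq_at n (x y : qvert n) i : x i != y i -> x != y.
Proof. by apply: contra => /eqP ->. Qed.

Lemma flipn_neq n (x : qvert n) (k : 'I_n) : x != flipn x k.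
Proof. by apply: (@neq_at _ _ _ k); rewrite flipnE eqxx; case: (x k). Qed.

Lemma qadj_flip n (x : qvert n) (k : 'I_n) : qadj x (flipn x k).
Proof.
rewrite /qadj; apply/cards1P; exists k; apply/setP => i; rewrite !inE flipnE.
case: (i =P k) => [->|ne]; first by rewrite eqxx; case: (x k).
have : (i : nat) != k by apply/eqP => h; apply: ne; exact: val_inj.
by move/negbTE => ->; rewrite eqxx.
Qed.

Lemma qedge_flip n (x : qvert n) (k : 'I_n) : [set x; flipn x k] \in qedges n.
Proof. rewrite inE; apply/existsP; exists x; apply/existsP; exists (flipn x k). by rewrite eqxx qadj_flip. Qed.

Lemma qedgesP n (e : {set qvert n}) : e \in qedges n ->
  exists u (k : 'I_n), e = [set u; flipn u k].
Proof.
rewrite inE => /existsP [u /existsP [v /andP [/eqP -> ad]]].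
move: ad; rewrite /qadj => /cards1P [k hk]; exists u, k.
congr [set _; _]; apply/ffunP => i; rewrite flipnE.
move: (hk) => /setP /(_ i); rewrite !inE.
case: (i =P k) => [->|ne]; last first.
  have : (i : nat) != k by apply/eqP => h; apply: ne; exact: val_inj.
  by move/negbTE => -> /negbT; rewrite negbK => /eqP.
by rewrite !eqxx; case: (u k); case: (v k).
Qed.

Lemma topb_spec n (x : qvert n) (m : 'I_n) : x m -> (forall j : 'I_n, x j -> j <= m) -> topb x = m.
Proof.
move=> xm hj; apply/eqP; rewrite eqn_leq; apply/andP; split.
  by apply/bigmax_leqP => i; apply: hj.
by apply: (@leq_bigmax_cond _ (fun i => x i) (fun i : 'I_n => (i : nat)) m).
Qed.

Lemma topb_nz n (x : qvert n) : x != v0 n ->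
  exists2 m : 'I_n, x m & topb x = m /\ forall j : 'I_n, x j -> j <= m.
Proof.
move=> nz.
have : #|[pred i | x i]| > 0.
  have [i xi] : exists i, x i.
    apply/existsP; apply: contraR nz; rewrite negb_exists => /forallP h.
    by apply/eqP/ffunP => i; rewrite ffunE; apply/negbTE.
  by apply/card_gt0P; exists i.
move=> /(eq_bigmax_cond (fun i : 'I_n => (i : nat))) [m xm hm].
exists m => //; split; first by rewrite /topb -hm.
by move=> j xj; rewrite -hm; apply: (@leq_bigmax_cond _ (fun i => x i) (fun i : 'I_n => (i : nat)) j).
Qed.

Lemma flipn_ne n (x : qvert n) (k m : 'I_n) : m != k -> flipn x k m = x m.
Proof.
move=> ne; rewrite flipnE; case: eqP => // h; case/eqP: ne; exact: val_inj.
Qed.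

Lemma flipn_eq n (x : qvert n) (k : 'I_n) : flipn x k k = ~~ x k.
Proof. by rewrite flipnE eqxx. Qed.

Lemma tedge_inj n : {in [set~ v0 n] &, injective (@tedge n)}.
Proof.
move=> x y; rewrite !inE => nx ny.
have [mx xmx [tx hx]] := topb_nz nx.
have [my ymy [ty hy]] := topb_nz ny.
rewrite /tedge tx ty => h.
have yin : y \in [set x; flipn x mx] by rewrite h !inE eqxx.
have xin : x \in [set y; flipn y my] by rewrite -h !inE eqxx.
move: yin; rewrite !inE => /orP [/eqP //| /eqP yeq].
move: xin; rewrite !inE => /orP [/eqP //| /eqP xeq].
have ymx : y mx = false by rewrite yeq flipn_eq xmx.
have ne : mx != my by apply/eqP => e; move: ymy; rewrite -e ymx.
by move: xmx; rewrite xeq flipn_ne // ymx.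
Qed.

Lemma card_treeG n : #|treeG n| = 2 ^ n - 1.
Proof.
rewrite /treeG card_in_imset; last exact: tedge_inj.
by rewrite cardsC1 card_ffun card_bool card_ord subn1.
Qed.

Lemma tedge_qedge n (x : qvert n) : x != v0 n -> tedge x \in qedges n.
Proof.
move=> nx; have [m _ [t _]] := topb_nz nx.
rewrite /tedge t. exact: qedge_flip. Qed.

Lemma treeG_sub n : treeG n \subset qedges n.
Proof. apply/subsetP => e /imsetP [x]; rewrite !inE => nx ->.
by have := tedge_qedge nx; rewrite inE. Qed.

Lemma in_treeG n (x : qvert n) (m : 'I_n) : x m -> (forall j : 'I_n, x j -> j <= m) ->
  [set x; flipn x m] \in treeG n.
Proof.
move=> xm hj; apply/imsetP; exists x.
  rewrite !inE; apply: (@neq_at _ _ _ m); by rewrite ffunE xm.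
by rewrite /tedge (topb_spec xm hj).
Qed.

Lemma key2 n (a b : qvert n) : key [set a; b] = #|[set j : 'I_n | a j && b j]|.
Proof.
rewrite /key; apply: eq_card => j; rewrite !inE.
apply/forallP/andP => [h|[ha hb] v].
  by split; [have := h a | have := h b]; rewrite !inE eqxx ?orbT.
by rewrite !inE; apply/implyP => /orP [] /eqP ->.
Qed.

Lemma ord_natE n (i j : 'I_n) : ((i : nat) == j) = (i == j).
Proof. by []. Qed.

Lemma cycle_hyp n (e : {set qvert n}) : e \in qedges n :\: treeG n ->
  exists a b c d : qvert n,
     [/\ uniq [:: a; b; c; d], e = [set a; b] &
       forall f, f \in [:: [set b; c]; [set c; d]; [set d; a]] ->
         f \in treeG n \/ (f \in qedges n :\: treeG n /\ key f < key e)].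
Proof.
rewrite inE => /andP [nG eQ].
have [u [k ek]] := qedgesP eQ.
case: (boolP [exists j : 'I_n, (k < j) && u j]) => [/existsP [j0 /andP [kj uj]] | nex]; last first.
  exfalso; move/negP: nG; apply.
  have hj : forall j : 'I_n, k < j -> u j = false.
    move=> j kj; apply/negbTE; apply: contra nex => uj; apply/existsP; exists j; by rewrite kj.
  case uk: (u k).
    rewrite ek; apply: in_treeG => // j uj; rewrite leqNgt; apply/negP => kj.
    by rewrite hj in uj.
  rewrite ek setUC -{2}(flipnK u k); apply: in_treeG; first by rewrite flipnE eqxx uk.
  move=> j; rewrite flipnE; case: eqP => [-> //|_ uj]; rewrite leqNgt; apply/negP => kj.
  by rewrite hj in uj.
have nz : u != v0 n by apply: (@neq_at _ _ _ j0); rewrite ffunE uj.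
have [mo umo [tu hu]] := topb_nz nz.
have kmo : k < mo by apply: (leq_trans kj); apply: hu.
have hkm : (k == mo :> nat) = false by apply/negbTE; rewrite neq_ltn kmo.
have hmk : (mo == k :> nat) = false by apply/negbTE; rewrite neq_ltn kmo orbT.
set b := flipn u k; set d := flipn u mo; set c := flipn b mo.
have ec : c = flipn d k by rewrite /c /b /d flipnC.
exists u, b, c, d; split => //.
- rewrite /= !inE !negb_or; rewrite /c /b /d.
  rewrite (flipn_neq u k) (flipn_neq u mo) (flipn_neq (flipn u k) mo) /=.
  rewrite !andbT; apply/and3P; split; apply: (@neq_at _ _ _ k);
    rewrite !flipnE eqxx ?hkm ?hmk; by case: (u k).
move=> f; rewrite !inE => /or3P [] /eqP ->.
- left; apply: in_treeG; first by rewrite /b flipnE hmk.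
  move=> j; rewrite /b flipnE; case: eqP => [-> _|_ /hu //]; exact: ltnW.
- have cq : [set c; d] \in qedges n by rewrite ec setUC qedge_flip.
  case: (boolP ([set c; d] \in treeG n)) => [ct | nt]; [by left | right].
  split; first by move: cq; rewrite inE.
  rewrite ek !key2; apply: proper_card; apply/properP; split.
    apply/subsetP => j; rewrite !inE /c /b /d !flipnE.
    case: (j =P mo) => [->|jm]; first by rewrite eqxx umo andbF.
    have : (j == mo :> nat) = false by apply/negbTE/eqP => h; apply: jm; exact: val_inj.
    by move=> ->; rewrite andbC.
  exists mo; rewrite !inE /c /b /d !flipnE ?eqxx ?hmk ?umo //.
- by left; rewrite setUC /d; apply: in_treeG.
Qed.

Definition chi (T : finType) (e : {set T}) : {ffun T -> bool} := [ffun v => v \in e].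
Definition bd (T : finType) (F : {set {set T}}) : {ffun T -> bool} :=
  [ffun v => \big[addb/false]_(e in F) (v \in e)].
Definition xorf (T : finType) (f g : {ffun T -> bool}) : {ffun T -> bool} :=
  [ffun v => f v (+) g v].
Definition zf (T : finType) : {ffun T -> bool} := [ffun _ => false].
Definition R (T : finType) (H : {set {set T}}) (f : {ffun T -> bool}) :=
  exists2 F : {set {set T}}, F \subset H & bd F = f.

Lemma bd0 (T : finType) : bd (set0 : {set {set T}}) = zf T.
Proof. by apply/ffunP => v; rewrite !ffunE big_set0. Qed.

Lemma bd1 (T : finType) (e : {set T}) : bd [set e] = chi e.
Proof. by apply/ffunP => v; rewrite !ffunE big_set1. Qed.

Lemma bdD1 (T : finType) (F : {set {set T}}) e : e \in F -> bd F = xorf (chi e) (bd (F :\ e)).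
Proof. by move=> eF; apply/ffunP => v; rewrite !ffunE (big_setD1 _ eF). Qed.

Lemma xorfA (T : finType) (f g h : {ffun T -> bool}) : xorf f (xorf g h) = xorf (xorf f g) h.
Proof. by apply/ffunP => v; rewrite !ffunE addbA. Qed.
Lemma xorfC (T : finType) (f g : {ffun T -> bool}) : xorf f g = xorf g f.
Proof. by apply/ffunP => v; rewrite !ffunE addbC. Qed.
Lemma xorf0 (T : finType) (f : {ffun T -> bool}) : xorf f (zf T) = f.
Proof. by apply/ffunP => v; rewrite !ffunE addbF. Qed.
Lemma xorfK (T : finType) (f g : {ffun T -> bool}) : xorf f (xorf f g) = g.
Proof. by apply/ffunP => v; rewrite !ffunE addKb. Qed.

Lemma R_chi (T : finType) (H : {set {set T}}) e : e \in H -> R H (chi e).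
Proof. by move=> eH; exists [set e]; [rewrite sub1set | rewrite bd1]. Qed.

Lemma R_zf (T : finType) (H : {set {set T}}) : R H (zf T).
Proof. by exists set0; [rewrite sub0set | rewrite bd0]. Qed.

Lemma R_xor_chi (T : finType) (H : {set {set T}}) e f : e \in H -> R H f -> R H (xorf (chi e) f).
Proof.
move=> eH [F sF <-]; case: (boolP (e \in F)) => eF.
  exists (F :\ e); first by apply: subset_trans sF; apply: subD1set.
  by rewrite (bdD1 eF) xorfK.
exists (e |: F); first by rewrite subUset sub1set eH sF.
by rewrite (bdD1 (setU11 e F)) setU1K.
Qed.

Lemma R_xor_bd (T : finType) (H : {set {set T}}) (F : {set {set T}}) f :
  F \subset H -> R H f -> R H (xorf (bd F) f).
Proof.
move: {2}#|F| (erefl #|F|) => k; elim: k F f => [|k IH] F f cF sF Rf.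
  by move/eqP: cF; rewrite cards_eq0 => /eqP ->; rewrite bd0 xorfC xorf0.
have : 0 < #|F| by rewrite cF.
case/card_gt0P => e eF.
rewrite (bdD1 eF) -xorfA; apply: R_xor_chi; first by apply: (subsetP sF).
apply: IH => //; first by move: cF; rewrite (cardsD1 e) eF add1n => [[]].
by apply: subset_trans sF; apply: subD1set.
Qed.

Lemma R_xor (T : finType) (H : {set {set T}}) f g : R H f -> R H g -> R H (xorf f g).
Proof. by move=> [F sF <-] Rg; apply: R_xor_bd. Qed.

Lemma R_ext (T : finType) (H : {set {set T}}) e f : R H (chi e) -> R (e |: H) f -> R H f.
Proof.
move=> Re [F sF <-]; case: (boolP (e \in F)) => eF.
  rewrite (bdD1 eF); apply: R_xor => //; exists (F :\ e) => //.
  apply/subsetP => x; rewrite !inE => /andP [xe xF].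
  by move: (subsetP sF x xF); rewrite !inE (negbTE xe).
exists F => //; apply/subsetP => x xF.
by move: (subsetP sF x xF); rewrite !inE => /orP [/eqP xe|//]; move: eF; rewrite -xe xF.
Qed.

Lemma chi_cycle (T : finType) (a b c d : T) : uniq [:: a; b; c; d] ->
  chi [set a; b] = xorf (chi [set b; c]) (xorf (chi [set c; d]) (chi [set d; a])).
Proof.
rewrite /= !inE !negb_or => /and4P [/and3P [ab ac ad] /andP [bc bd'] cd _].
have ba : b != a by rewrite eq_sym.
have ca : c != a by rewrite eq_sym.
have da : d != a by rewrite eq_sym.
have cb : c != b by rewrite eq_sym.
have db : d != b by rewrite eq_sym.
have dc : d != c by rewrite eq_sym.
apply/ffunP => v; rewrite !ffunE !inE.
have E := (negbTE ab, negbTE ac, negbTE ad, negbTE bc, negbTE bd', negbTE cd,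
  negbTE ba, negbTE ca, negbTE da, negbTE cb, negbTE db, negbTE dc).
case: (v =P a) => [->|_]; first by rewrite ?E.
case: (v =P b) => [->|_]; first by rewrite ?E.
case: (v =P c) => [->|_]; first by rewrite ?E.
by case: (v =P d).
Qed.

Lemma ws_all n (G : {set {set qvert n}}) : weakly_saturated G ->
  forall e, e \in qedges n -> R G (chi e).
Proof.
move=> [sub [s [us ms hs]]].
have claim : forall i, i <= size s -> forall f, R (G :|: [set x in take i s]) f -> R G f.
  elim => [|i IH] ilt f.
    have -> : G :|: [set x in take 0 s] = G by apply/setP => x; rewrite !inE take0 orbF.
    done.
  have ilt' : i < size s := ilt.
  have eqH : G :|: [set x in take i.+1 s] = nth set0 s i |: (G :|: [set x in take i s]).
    apply/setP => x; rewrite (take_nth set0 ilt') !inE mem_rcons in_cons.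
    by rewrite orbA [(x \in G) || _]orbC -orbA.
  rewrite eqH => Rf; apply: (IH (ltnW ilt')); apply: R_ext Rf.
  have [a [b [c [d [u ea h1 h2 h3]]]]] := hs i ilt'.
  rewrite ea (chi_cycle u); apply: R_xor; first exact: R_chi.
  by apply: R_xor; apply: R_chi.
move=> e eQ; case: (boolP (e \in G)) => eG; first exact: R_chi.
apply: (claim (size s) (leqnn _)); apply: R_chi.
by rewrite take_size !inE ms in_setD eG eQ orbT.
Qed.

Lemma chi_pair n (x y : qvert n) : x != y -> chi [set x; y] = xorf (chi [set x]) (chi [set y]).
Proof.
move=> xy; apply/ffunP => v; rewrite !ffunE !inE.
case: (v =P x) => [->|_]; last by [].
by rewrite (negbTE xy).
Qed.

Lemma path_v0 n (G : {set {set qvert n}}) : weakly_saturated G ->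
  forall x : qvert n, R G (xorf (chi [set x]) (chi [set v0 n])).
Proof.
move=> ws x; move: {2}#|[set j | x j]| (erefl #|[set j | x j]|) => k.
elim: k x => [|k IH] x cx.
  have -> : x = v0 n.
    apply/ffunP => i; rewrite ffunE; apply/negbTE/negP => xi.
    by move: cx; rewrite (cardsD1 i) inE xi.
  rewrite (_ : xorf _ _ = zf _); first exact: R_zf.
  by apply/ffunP => v; rewrite !ffunE addbb.
have : 0 < #|[set j | x j]| by rewrite cx.
case/card_gt0P => i; rewrite inE => xi.
have ne := flipn_neq x i.
rewrite -(xorfK (chi [set flipn x i]) (chi [set v0 n])) xorfA -chi_pair //.
apply: R_xor; first by apply: (ws_all ws); apply: qedge_flip.
apply: IH; move: cx; rewrite (cardsD1 i) inE xi add1n => [[<-]].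
apply: eq_card => j; rewrite !inE flipnE.
case: (j =P i) => [->|ji]; first by rewrite eqxx xi.
have : (j : nat) != i by apply/eqP => h; apply: ji; exact: val_inj.
by move/negbTE => ->.
Qed.

Lemma reach_T n (G : {set {set qvert n}}) : weakly_saturated G ->
  forall T : {set qvert n}, exists2 f, R G f & forall v, v != v0 n -> f v = (v \in T).
Proof.
move=> ws T; move: {2}#|T| (erefl #|T|) => k; elim: k T => [|k IH] T cT.
  exists (zf _); first exact: R_zf.
  by move/eqP: cT; rewrite cards_eq0 => /eqP -> v _; rewrite ffunE inE.
have : 0 < #|T| by rewrite cT.
case/card_gt0P => x xT.
have [f Rf hf] : exists2 f, R G f & forall v, v != v0 n -> f v = (v \in T :\ x).
  by apply: IH; move: cT; rewrite (cardsD1 x) xT add1n => [[]].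
exists (xorf (xorf (chi [set x]) (chi [set v0 n])) f).
  by apply: R_xor => //; apply: path_v0.
move=> v nv; rewrite !ffunE hf // !inE (negbTE nv) addbF.
by case: (v =P x) => [->|_]; rewrite ?xT.
Qed.

Lemma lower n (G : {set {set qvert n}}) : weakly_saturated G -> 2 ^ n - 1 <= #|G|.
Proof.
move=> ws.
pose g := fun F : {set {set qvert n}} => [set v | (v != v0 n) && bd F v].
have sP : powerset [set~ v0 n] \subset g @: powerset G.
  apply/subsetP => T; rewrite inE => /subsetP sT.
  have [f [F sF <-] hf] := reach_T ws T.
  apply/imsetP; exists F; first by rewrite inE.
  apply/setP => v; rewrite !inE; case: (v =P v0 n) => [->|/eqP nv] /=.
    by apply/negP => /sT; rewrite !inE eqxx.
  by rewrite hf.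
have := leq_trans (subset_leq_card sP) (leq_imset_card _ _).
rewrite !card_powerset cardsC1 card_ffun card_bool card_ord leq_exp2l // subn1. done.
Qed.

Theorem mainTheorem12 (n : nat) (hn : 1 <= n) :
  (exists G : {set {set qvert n}}, weakly_saturated G /\ #|G| = 2 ^ n - 1) /\
  (forall G : {set {set qvert n}}, weakly_saturated G -> 2 ^ n - 1 <= #|G|).
Proof.
split; last exact: lower.
exists (treeG n); split; last exact: card_treeG.
split; first exact: treeG_sub.
apply: (@order_lemma n (treeG n) (qedges n :\: treeG n) (@key n)).
exact: cycle_hyp.
Qed.
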